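(* Let $P$ be a positive program (heads may be arbitrary c-atoms). If a set of atoms $M$ is an answer set of $P$ in the sense that $M$ is a model of $P$ and $M$ is an answer set of the positive basic program $inst(P,M)$, then $M$ is an answer set of $P$ in the sense of Marek and Remmel, i.e., $M$ is a model of $P$ and $M$ equals the least fixpoint of the one-step provability operator of $NSS(P,M)$.
   Context: Fix a countable set $\mathcal{A}$ of atoms. A c-atom is $A=(A_d,A_c)$, $A_d\subseteq\mathcal{A}$, $A_c\subseteq 2^{A_d}$; $(\{p\},\{\{p\}\})$ is the elementary c-atom $p$; $\bot=(\mathcal{A},\emptyset)$. A positive rule has the form $A\leftarrow A_1,\dots,A_k$ with c-atoms; $head(r)=A$, $pos(r)=body(r)=\{A_1,\dots,A_k\}$; a positive program is a set of such rules. $S\models A$ iff $S\cap A_d\in A_c$; $S\models body(r)$ iff $S\models A_i$ for all $i$; model = satisfies every rule (head holds or body fails). Conditional satisfaction: $S\models_M A$ iff $S\models A$ and every $I$ with $S\cap A_d\subseteq I\subseteq M\cap A_d$ lies in $A_c$. For a positive program $Q$ whose heads are elementary or $\bot$: $T_Q(S,M)=\{a\mid \exists r\in Q,\ head(r)=(\{a\},\{\{a\}\}),\ S\models_M B\ \forall B\in pos(r)\}$, $T^0_Q(\emptyset,M)=\emptyset$, $T^{i+1}_Q(\emptyset,M)=T_Q(T^i_Q(\emptyset,M),M)$, $T^\infty_Q(\emptyset,M)=\bigcup_iT^i_Q(\emptyset,M)$; a model $M$ of $Q$ is an answer set of $Q$ iff $M=T^\infty_Q(\emptyset,M)$. Instance: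 for a rule $r$ and set $M$, $inst(r,M)=\{b\leftarrow body(r)\mid b\in M\cap head(r)_d\}$ if $M\cap head(r)_d\in head(r)_c$, and $\emptyset$ otherwise; $inst(P,M)=\bigcup_{r\in P}inst(r,M)$. Marek–Remmel semantics: the closure of $A$ is $\widehat A=(A_d,\{Y\subseteq A_d\mid \exists Z\in A_c,\ Z\subseteq Y\})$. $NSS(P,M)$ is obtained by (i) removing every rule whose body is not satisfied by $M$, and (ii) replacing each remaining rule $A\leftarrow e_1,\dots,e_n,A_1,\dots,A_m$ (with $e_i$ elementary and $A_j$ non-elementary) by the rules $a\leftarrow e_1,\dots,e_n,\widehat{A_1},\dots,\widehat{A_m}$ for each $a\in A_d\cap M$. For such a program $Q'$ (elementary heads, elementary or closed body c-atoms) the operator $T_{Q'}(X)=\{a\mid\exists r\in Q',\ head(r)=a,\ X\models body(r)\}$ is monotone and has a least fixpoint $M^{Q'}$. A model $S$ of $P$ is a Marek–Remmel answer set iff $S=M^{NSS(P,S)}$. *)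

(* Defs.v *)
From Stdlib Require Import List.
Import ListNotations.

(* The countable set of atoms is taken to be nat. *)
Definition atom := nat.
Definition aset := atom -> Prop.
Definition seteq (X Y : aset) : Prop := forall a, X a <-> Y a.
Definition subset (X Y : aset) : Prop := forall a, X a -> Y a.
Definition inter (X Y : aset) : aset := fun a => X a /\ Y a.
Definition single (p : atom) : aset := fun a => a = p.

(* c-atom A = (A_d, A_c); A_c is a family of sets, membership taken up to
   extensional equality of sets (see in_c). *)
Record catom := mkCatom { dom : aset; cont : aset -> Prop }.

Definition in_c (A : catom) (X : aset) : Prop :=
  exists Z, cont A Z /\ seteq Z X.

Definition wf_catom (A : catom) : Prop :=
  forall Z, cont A Z -> subset Z (dom A).

Definition elem (p : atom) : catom :=
  mkCatom (single p) (fun Z => seteq Z (single p)).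
Definition bot : catom := mkCatom (fun _ => True) (fun _ => False).

Definition elementary (A : catom) : Prop :=
  exists p, seteq (dom A) (single p) /\
            forall X, in_c A X <-> seteq X (single p).

Record rule := mkRule { head : catom; body : list catom }.
Definition program := rule -> Prop.

Definition wf_program (P : program) : Prop :=
  forall r, P r -> wf_catom (head r) /\ Forall wf_catom (body r).

Definition sat (S : aset) (A : catom) : Prop := in_c A (inter S (dom A)).
Definition sat_body (S : aset) (bd : list catom) : Prop :=
  forall B, In B bd -> sat S B.
Definition sat_rule (S : aset) (r : rule) : Prop :=
  sat_body S (body r) -> sat S (head r).
Definition model (P : program) (S : aset) : Prop :=
  forall r, P r -> sat_rule S r.

Definition csat (S M : aset) (A : catom) : Prop :=
  sat S A /\
  forall I, subset (inter S (dom A)) I -> subset I (inter M (dom A)) -> in_c A I.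

Definition TQ (Q : program) (M : aset) (S : aset) : aset :=
  fun a => exists r, Q r /\ head r = elem a /\
                     forall B, In B (body r) -> csat S M B.

Fixpoint Titer (Q : program) (M : aset) (n : nat) : aset :=
  match n with
  | O => fun _ => False
  | S n' => TQ Q M (Titer Q M n')
  end.

Definition Tinf (Q : program) (M : aset) : aset :=
  fun a => exists n, Titer Q M n a.

Definition answer_set_basic (Q : program) (M : aset) : Prop :=
  model Q M /\ seteq M (Tinf Q M).

Definition inst (P : program) (M : aset) : program :=
  fun r' => exists r b, P r /\ sat M (head r) /\ dom (head r) b /\ M b /\
                        r' = mkRule (elem b) (body r).

Definition closure (A : catom) : catom :=
  mkCatom (dom A) (fun Y => subset Y (dom A) /\ exists Z, cont A Z /\ subset Z Y).

(* rules of NSS(P,M): elementary head a, body of elementary / closed c-atoms *)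
Definition nss_rule := (atom * list catom)%type.

Definition nss_atom (B B' : catom) : Prop :=
  (elementary B /\ B' = B) \/ (~ elementary B /\ B' = closure B).

Definition NSS (P : program) (M : aset) : nss_rule -> Prop :=
  fun q => exists r, P r /\ sat_body M (body r) /\
                     dom (head r) (fst q) /\ M (fst q) /\
                     Forall2 nss_atom (body r) (snd q).

Definition T_NSS (Q : nss_rule -> Prop) (X : aset) : aset :=
  fun a => exists bd, Q (a, bd) /\ sat_body X bd.

Definition is_lfp (T : aset -> aset) (S : aset) : Prop :=
  seteq (T S) S /\ forall X, seteq (T X) X -> subset S X.

Definition mr_answer_set (P : program) (S : aset) : Prop :=
  model P S /\ is_lfp (T_NSS (NSS P S)) S.

(* Main.v *)
Require Import Defs.
From Stdlib Require Import List Classical.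
Import ListNotations.

Lemma exists_list (R : catom -> catom -> Prop) (l : list catom) :
  (forall B, In B l -> exists B', R B B') ->
  exists bd, Forall2 R l bd /\ (forall B', In B' bd -> exists B, In B l /\ R B B').
Proof.
  induction l as [|x l IH]; intros H.
  - exists []. split; [constructor|intros B' []].
  - destruct (H x (or_introl eq_refl)) as [x' Hx'].
    destruct IH as [bd [H1 H2]]. { intros B HB. apply H. now right. }
    exists (x' :: bd). split; [now constructor|].
    intros B' [<-|HB']. + exists x. split; [now left|auto].
    + destruct (H2 B' HB') as [B [HB HR]]. exists B. split; [now right|auto].
Qed.

Lemma build_bd (Y : aset) (l : list catom) :
  (forall B, In B l -> exists Z0, cont B Z0 /\ subset Z0 (inter Y (dom B))) ->
  (forall B, In B l -> elementary B -> sat Y B) ->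
  exists bd, Forall2 nss_atom l bd /\ sat_body Y bd.
Proof.
  intros H1 H2.
  destruct (exists_list (fun B B' => nss_atom B B' /\ sat Y B') l) as [bd [F G]].
  - intros B HB. destruct (classic (elementary B)) as [E|NE].
    + exists B. split; [left; auto|]. now apply H2.
    + exists (closure B). split; [right; auto|].
      destruct (H1 B HB) as [Z0 [C S]].
      exists (inter Y (dom B)). simpl. split; [|intro; tauto].
      split; [intros a [_ Ha]; exact Ha|]. exists Z0; auto.
  - exists bd. split.
    + eapply Forall2_impl; [|exact F]. simpl. tauto.
    + intros B' HB'. destruct (G B' HB') as [B [_ [_ S]]]. exact S.
Qed.

Lemma elem_inj a b : elem a = elem b -> a = b.
Proof.
  intro H. assert (single a a) by reflexivity.
  assert (E : dom (elem a) = dom (elem b)) by now rewrite H.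
  simpl in E. rewrite E in H0. exact H0.
Qed.

Lemma csat_sat S M B : subset S M -> csat S M B -> sat M B.
Proof.
  intros HS [_ H]. apply H; [intros a [Ha Hd]; split; auto|intros a Ha; exact Ha].
Qed.

Lemma Titer_sub Q M n : seteq M (Tinf Q M) -> subset (Titer Q M n) M.
Proof. intros E a Ha. apply E. now exists n. Qed.

Theorem proposition7 (P : program) (M : aset) :
  wf_program P ->
  model P M ->
  answer_set_basic (inst P M) M ->
  mr_answer_set P M.
Proof.
  intros _ HM [_ HE]. split; [exact HM|]. split.
  - intro a. split.
    + intros [bd [[r [_ [_ [_ [Ma _]]]]] _]]. exact Ma.
    + intro Ma. destruct (proj1 (HE a) Ma) as [n Hn].
      destruct n as [|n]; [destruct Hn|].
      destruct Hn as [r' [[r [b [Pr [_ [Db [Mb ->]]]]]] [Hh Hb]]].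
      simpl in Hh, Hb. apply elem_inj in Hh. subst b.
      assert (SB : sat_body M (body r)).
      { intros B HB. eapply csat_sat; [apply (Titer_sub _ _ n HE)|auto]. }
      destruct (build_bd M (body r)) as [bd [F S]].
      * intros B HB. destruct (SB B HB) as [Z0 [C E]]. exists Z0. split; auto.
        intros x Hx; now apply E.
      * intros B HB _. auto.
      * exists bd. split; [|exact S]. exists r. simpl. auto.
  - intros X HX1 a Ma. destruct (proj1 (HE a) Ma) as [n Hn]. revert a Hn Ma.
    induction n as [|n IH]; intros a Hn Ma; [destruct Hn|].
    destruct Hn as [r' [[r [b [Pr [_ [Db [Mb ->]]]]]] [Hh Hb]]].
    simpl in Hh, Hb. apply elem_inj in Hh. subst b.
    assert (SB : sat_body M (body r)).
    { intros B HB. eapply csat_sat; [apply (Titer_sub _ _ n HE)|auto]. }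
    assert (IH' : subset (Titer (inst P M) M n) X).
    { intros x Hx. apply IH; auto. apply (Titer_sub _ _ n HE); auto. }
    destruct (build_bd X (body r)) as [bd [F S]].
    + intros B HB. destruct (Hb B HB) as [[Z0 [C E]] _]. exists Z0. split; auto.
      intros x Hx. destruct (proj1 (E x) Hx) as [H1 H2]. split; auto.
    + intros B HB [p [Hd Hc]]. destruct (Hb B HB) as [St _].
      assert (Hp : seteq (inter (Titer (inst P M) M n) (dom B)) (single p)).
      { apply Hc. exact St. }
      apply Hc. intro x. split.
      * intros [_ Hx]. now apply Hd.
      * intro Hx. assert (Hx' := proj2 (Hp x) Hx). destruct Hx' as [T D].
        split; auto.
    + apply (proj1 (HX1 a)). exists bd. split; [|exact S]. exists r. simpl. auto.
Qed.
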